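(* Let $\mathcal{T}=\mathcal{X}=\mathcal{Y}=\{0,1\}$ and $P\in\Delta_{\mathcal{T},\mathcal{X},\mathcal{Y}}$ with $P(T=0)>0$, $P(T=1)>0$. Set $b=P(X=0\mid T=0)$, $c=P(X=0\mid T=1)$, $d=P(Y=0\mid T=0)$, $e=P(Y=0\mid T=1)$. Then $\arg\max_{Q\in\Delta_P}H_Q(T\mid X,Y)$ consists of a single point unless $b=c$ and $d=e$.
   Context: $\Delta_{\mathcal{T},\mathcal{X},\mathcal{Y}}$ is the set of all joint distributions of $(T,X,Y)$. For $P$, $\Delta_P=\{Q\in\Delta_{\mathcal{T},\mathcal{X},\mathcal{Y}}: Q(X=x,T=t)=P(X=x,T=t),\ Q(Y=y,T=t)=P(Y=y,T=t)\ \forall x,y,t\}$. $H_Q(T\mid X,Y)$ is the conditional entropy under $Q$. *)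

(* Defs.v *)
From Stdlib Require Import Reals.
Open Scope R_scope.

(* Alphabets T = X = Y = {0,1} are encoded by bool, with false = 0, true = 1.
   A joint distribution of (T,X,Y) is a function Q t x y = Q(T=t,X=x,Y=y). *)
Definition jdist := bool -> bool -> bool -> R.

Definition sumb (f : bool -> R) : R := f false + f true.

Definition is_dist (Q : jdist) : Prop :=
  (forall t x y, 0 <= Q t x y) /\
  sumb (fun t => sumb (fun x => sumb (fun y => Q t x y))) = 1.

Definition margT (Q : jdist) (t : bool) : R :=
  sumb (fun x => sumb (fun y => Q t x y)).
Definition margTX (Q : jdist) (t x : bool) : R := sumb (fun y => Q t x y).
Definition margTY (Q : jdist) (t y : bool) : R := sumb (fun x => Q t x y).
Definition margXY (Q : jdist) (x y : bool) : R := sumb (fun t => Q t x y).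

Definition DeltaP (P Q : jdist) : Prop :=
  is_dist Q /\
  (forall t x, margTX Q t x = margTX P t x) /\
  (forall t y, margTY Q t y = margTY P t y).

Definition entTerm (q m : R) : R :=
  if Rlt_dec 0 q then q * (ln (m / q) / ln 2) else 0.

(* conditional entropy H_Q(T | X, Y) = - sum Q(t,x,y) log2 (Q(t,x,y)/Q(x,y)) *)
Definition condEntT_XY (Q : jdist) : R :=
  sumb (fun t => sumb (fun x => sumb (fun y =>
    entTerm (Q t x y) (margXY Q x y)))).

Definition is_argmax (P Q : jdist) : Prop :=
  DeltaP P Q /\ (forall Q', DeltaP P Q' -> condEntT_XY Q' <= condEntT_XY Q).

(* Main.v *)
Require Import Defs.
From Stdlib Require Import Reals.
Open Scope R_scope.
From Stdlib Require Import Lra.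

Lemma ln_le_m1 y : 0 < y -> ln y <= y - 1.
Proof. intros Hy. pose proof (exp_ineq1_le (ln y)). rewrite exp_ln in H; lra. Qed.

Lemma ln_lt_m1 y : 0 < y -> y <> 1 -> ln y < y - 1.
Proof. intros Hy H1. assert (ln y <> 0).
  { intro E. apply H1. rewrite <- (exp_ln y) by lra. rewrite E. apply exp_0. }
  pose proof (exp_ineq1 (ln y) H). rewrite exp_ln in H0; lra. Qed.

Definition L (q m : R) : R := if Rlt_dec 0 q then q * ln (q / m) else 0.

Lemma Li a b A B : 0 <= a <= b -> 0 < A <= B ->
  a * ln (A / B) + a - b * A / B <= L a b /\
  (0 < a -> b * A <> a * B -> a * ln (A / B) + a - b * A / B < L a b).
Proof.
  intros Ha HA. unfold L. destruct (Rlt_dec 0 a) as [Hp|Hn].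
  - assert (Hb : 0 < b) by lra.
    assert (E : ln (a / b) = ln (A / B) - ln (b * A / (a * B))).
    { assert (Hy0 : 0 < b * A / (a * B)).
      { apply Rdiv_lt_0_compat; apply Rmult_lt_0_compat; lra. }
      replace (a / b) with ((A / B) * / (b * A / (a * B))) by (field; repeat split; lra).
      rewrite ln_mult, ln_Rinv; try lra. apply Rdiv_lt_0_compat; lra.
      apply Rinv_0_lt_compat; lra. }
    assert (Hy : 0 < b * A / (a * B)).
    { apply Rdiv_lt_0_compat; apply Rmult_lt_0_compat; lra. }
    rewrite E. split.
    + pose proof (ln_le_m1 _ Hy).
      assert (a * ln (b * A / (a * B)) <= a * (b * A / (a * B) - 1)) by (apply Rmult_le_compat_l; lra).
      replace (a * (b * A / (a * B) - 1)) with (b * A / B - a) in H0 by (field; lra).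
      nra.
    + intros _ Hne. assert (b * A / (a * B) <> 1).
      { intro E1. apply Hne. assert (b*A = (b*A/(a*B))*(a*B)) by (field; lra).
        rewrite E1 in H; lra. }
      pose proof (ln_lt_m1 _ Hy H).
      assert (a * ln (b * A / (a * B)) < a * (b * A / (a * B) - 1)) by (apply Rmult_lt_compat_l; lra).
      replace (a * (b * A / (a * B) - 1)) with (b * A / B - a) in H1 by (field; lra).
      nra.
  - assert (a = 0) by lra. subst. split.
    + assert (0 <= b * A / B). { apply Rmult_le_pos. apply Rmult_le_pos; lra. left; apply Rinv_0_lt_compat; lra. }
      lra.
    + intros; lra.
Qed.

Lemma logsum a1 a2 b1 b2 : 0 <= a1 <= b1 -> 0 <= a2 <= b2 ->
  L (a1 + a2) (b1 + b2) <= L a1 b1 + L a2 b2 /\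
  (a1 * b2 <> a2 * b1 -> L (a1 + a2) (b1 + b2) < L a1 b1 + L a2 b2).
Proof.
  intros H1 H2.
  destruct (Rlt_dec 0 (a1 + a2)) as [HA|HA].
  - assert (HLA : L (a1 + a2) (b1 + b2) = (a1 + a2) * ln ((a1 + a2) / (b1 + b2))).
    { unfold L. destruct (Rlt_dec 0 (a1 + a2)); [reflexivity|lra]. }
    assert (HAB : 0 < a1 + a2 <= b1 + b2) by lra.
    destruct (Li a1 b1 _ _ H1 HAB) as [L1 S1].
    destruct (Li a2 b2 _ _ H2 HAB) as [L2 S2].
    assert (Esum : b1 * (a1 + a2) / (b1 + b2) + b2 * (a1 + a2) / (b1 + b2) = a1 + a2)
      by (field; lra).
    rewrite HLA. split.
    + nra.
    + intros Hne. destruct (Rlt_dec 0 a1) as [Ha1|Ha1].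
      * assert (b1 * (a1 + a2) <> a1 * (b1 + b2)) by (intro; apply Hne; nra).
        specialize (S1 Ha1 H). nra.
      * assert (a1 = 0) by lra. subst a1.
        assert (Ha2 : 0 < a2) by lra.
        assert (b2 * (0 + a2) <> a2 * (b1 + b2)) by (intro; apply Hne; nra).
        specialize (S2 Ha2 H). nra.
  - assert (a1 = 0) by lra. assert (a2 = 0) by lra. subst.
    unfold L. destruct (Rlt_dec 0 (0+0)); try lra.
    destruct (Rlt_dec 0 0); try lra.
Qed.

Definition cell (u v : R) : R := entTerm u (u + v) + entTerm v (u + v).

Lemma ln2_pos : 0 < ln 2.
Proof. pose proof ln_lt_2; lra. Qed.

Lemma entTerm_L q m : 0 <= q <= m -> entTerm q m = - L q m / ln 2.
Proof.
  intros H. pose proof ln2_pos. unfold entTerm, L. destruct (Rlt_dec 0 q).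
  - replace (m / q) with (/ (q / m)) by (field; lra).
    rewrite ln_Rinv. field. lra. apply Rdiv_lt_0_compat; lra.
  - field. lra.
Qed.

Lemma L_half a b : 0 <= a <= b -> L (a / 2) (b / 2) = L a b / 2.
Proof.
  intros H. unfold L. destruct (Rlt_dec 0 (a/2)); destruct (Rlt_dec 0 a); try lra.
  replace (a / 2 / (b / 2)) with (a / b) by (field; lra). field.
Qed.

Lemma cell_mid u1 v1 u2 v2 : 0 <= u1 -> 0 <= v1 -> 0 <= u2 -> 0 <= v2 ->
  cell u1 v1 + cell u2 v2 <= 2 * cell ((u1+u2)/2) ((v1+v2)/2) /\ (u1 * v2 <> u2 * v1 -> cell u1 v1 + cell u2 v2 < 2 * cell ((u1+u2)/2) ((v1+v2)/2)).
Proof.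
  intros. pose proof ln2_pos. unfold cell.
  replace ((u1 + u2) / 2 + (v1 + v2) / 2) with (((u1+v1) + (u2+v2)) / 2) by field.
  rewrite !entTerm_L by lra.
  rewrite !L_half by lra.
  destruct (logsum u1 u2 (u1+v1) (u2+v2)) as [A1 A2]; try lra.
  destruct (logsum v1 v2 (u1+v1) (u2+v2)) as [B1 B2]; try lra.
  split.
  - apply Rmult_le_reg_r with (ln 2); auto.
    replace ((- L u1 (u1 + v1) / ln 2 + - L v1 (u1 + v1) / ln 2 +
       (- L u2 (u2 + v2) / ln 2 + - L v2 (u2 + v2) / ln 2)) * ln 2) with
      (- L u1 (u1 + v1) - L v1 (u1 + v1) - L u2 (u2 + v2) - L v2 (u2 + v2)) by (field; lra).
    replace (2 * (- (L (u1 + u2) (u1 + v1 + (u2 + v2)) / 2) / ln 2 +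
        - (L (v1 + v2) (u1 + v1 + (u2 + v2)) / 2) / ln 2) * ln 2) with
      (- L (u1 + u2) (u1 + v1 + (u2 + v2)) - L (v1 + v2) (u1 + v1 + (u2 + v2))) by (field; lra).
    lra.
  - intros Hne. assert (u1 * (u2 + v2) <> u2 * (u1 + v1)) by (intro; apply Hne; nra).
    specialize (A2 H4).
    apply Rmult_lt_reg_r with (ln 2); auto.
    replace ((- L u1 (u1 + v1) / ln 2 + - L v1 (u1 + v1) / ln 2 +
       (- L u2 (u2 + v2) / ln 2 + - L v2 (u2 + v2) / ln 2)) * ln 2) with
      (- L u1 (u1 + v1) - L v1 (u1 + v1) - L u2 (u2 + v2) - L v2 (u2 + v2)) by (field; lra).
    replace (2 * (- (L (u1 + u2) (u1 + v1 + (u2 + v2)) / 2) / ln 2 +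
        - (L (v1 + v2) (u1 + v1 + (u2 + v2)) / 2) / ln 2) * ln 2) with
      (- L (u1 + u2) (u1 + v1 + (u2 + v2)) - L (v1 + v2) (u1 + v1 + (u2 + v2))) by (field; lra).
    lra.
Qed.

Lemma uniq_core A0 A1 B0 B1 C0 C1 a0 a1 b0 b1 :
  0 < A0 + C0 -> 0 < A1 + C1 ->
  a0 * b1 = b0 * a1 ->
  (A0 - a0) * (A1 - b1) = (A0 - b0) * (A1 - a1) ->
  (B0 - a0) * (B1 - b1) = (B0 - b0) * (B1 - a1) ->
  (C0 - B0 + a0) * (C1 - B1 + b1) = (C0 - B0 + b0) * (C1 - B1 + a1) ->
  (a0 = b0 /\ a1 = b1) \/
  (A0 / (A0 + C0) = A1 / (A1 + C1) /\ B0 / (A0 + C0) = B1 / (A1 + C1)).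
Proof.
  intros Hp0 Hp1 E1 E2 E3 E4.
  assert (F1 : a0 * (b1 - a1) = (b0 - a0) * a1) by nra.
  assert (F2 : A0 * (b1 - a1) = (b0 - a0) * A1) by nra.
  assert (F3 : B0 * (b1 - a1) = (b0 - a0) * B1) by nra.
  assert (F4 : C0 * (b1 - a1) = (b0 - a0) * C1) by nra.
  assert (F5 : (A0 + C0) * (b1 - a1) = (b0 - a0) * (A1 + C1)) by nra.
  destruct (Req_dec (b0 - a0) 0) as [Z|Z].
  - left. rewrite Z in F5. assert (b1 - a1 = 0).
    { assert ((A0 + C0) * (b1 - a1) = 0) by lra.
      destruct (Rmult_integral _ _ H); lra. }
    lra.
  - right. split.
    + assert (H1 := f_equal (fun z => z * (A0 + C0)) F2).
      assert (H2 := f_equal (fun z => z * A0) F5). simpl in H1, H2.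
      assert (G : (b0 - a0) * (A1 * (A0 + C0) - A0 * (A1 + C1)) = 0) by lra.
      destruct (Rmult_integral _ _ G) as [G1|G1]; [lra|].
      field_simplify_eq; lra.
    + assert (H1 := f_equal (fun z => z * (A0 + C0)) F3).
      assert (H2 := f_equal (fun z => z * B0) F5). simpl in H1, H2.
      assert (G : (b0 - a0) * (B1 * (A0 + C0) - B0 * (A1 + C1)) = 0) by lra.
      destruct (Rmult_integral _ _ G) as [G1|G1]; [lra|].
      field_simplify_eq; lra.
Qed.

From Stdlib Require Import FunctionalExtensionality.

Definition Qs (P : jdist) (s0 s1 : R) : jdist := fun t x y =>
  let s := if t then s1 else s0 in
  match x, y with
  | false, false => s
  | false, true => margTX P t false - s
  | true, false => margTY P t false - s
  | true, true => margTX P t true - margTY P t false + s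
  end.

Definition okc (P : jdist) (t : bool) (s : R) : Prop :=
  0 <= s /\ s <= margTX P t false /\ s <= margTY P t false /\
  margTY P t false - margTX P t true <= s.

Lemma DeltaP_Qs P Q : DeltaP P Q -> Q = Qs P (Q false false false) (Q true false false).
Proof.
  intros [_ [HX HY]].
  extensionality t; extensionality x; extensionality y.
  pose proof (HX t false) as X0. pose proof (HX t true) as X1.
  pose proof (HY t false) as Y0. pose proof (HY t true) as Y1.
  unfold margTX, margTY, sumb in *.
  destruct t, x, y; unfold Qs, margTX, margTY, sumb; simpl; lra.
Qed.

Lemma DeltaP_ok P Q t : DeltaP P Q -> okc P t (Q t false false).
Proof.
  intros H. pose proof (DeltaP_Qs P Q H) as E.
  destruct H as [[Hn _] [HX HY]].
  pose proof (HX t false) as X0. pose proof (HX t true) as X1.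
  pose proof (HY t false) as Y0. pose proof (HY t true) as Y1.
  pose proof (Hn t false false). pose proof (Hn t false true).
  pose proof (Hn t true false). pose proof (Hn t true true).
  unfold okc, margTX, margTY, sumb in *. lra.
Qed.

Lemma Qs_DeltaP P s0 s1 : is_dist P -> okc P false s0 -> okc P true s1 ->
  DeltaP P (Qs P s0 s1).
Proof.
  intros [_ HP] H0 H1. unfold Qs, okc, DeltaP, is_dist, margTX, margTY, sumb in *.
  split; [split|split].
  - intros t x y; destruct t, x, y; simpl; lra.
  - simpl. lra.
  - intros t x; destruct t, x; simpl; lra.
  - intros t y; destruct t, y; simpl; lra.
Qed.

Lemma condEnt_cells Q : condEntT_XY Q =
  cell (Q false false false) (Q true false false) +
  cell (Q false false true) (Q true false true) +
  cell (Q false true false) (Q true true false) +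
  cell (Q false true true) (Q true true true).
Proof. unfold condEntT_XY, cell, margXY, sumb. ring. Qed.

Lemma DeltaP_mid P Q1 Q2 : DeltaP P Q1 -> DeltaP P Q2 ->
  DeltaP P (fun t x y => (Q1 t x y + Q2 t x y) / 2).
Proof.
  intros [[N1 S1] [X1 Y1]] [[N2 S2] [X2 Y2]].
  unfold DeltaP, is_dist, margTX, margTY, sumb in *.
  split; [split|split].
  - intros t x y. specialize (N1 t x y); specialize (N2 t x y); lra.
  - lra.
  - intros t x. specialize (X1 t x); specialize (X2 t x); lra.
  - intros t y. specialize (Y1 t y); specialize (Y2 t y); lra.
Qed.

Lemma margT_split P t : margT P t = margTX P t false + margTX P t true.
Proof. reflexivity. Qed.

Lemma argmax_unique (P : jdist) (HT0 : 0 < margT P false) (HT1 : 0 < margT P true) :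
  ~ (margTX P false false / margT P false = margTX P true false / margT P true /\
     margTY P false false / margT P false = margTY P true false / margT P true) ->
  forall Q1 Q2, is_argmax P Q1 -> is_argmax P Q2 -> Q1 = Q2.
Proof.
  intros Hbc Q1 Q2 [D1 M1] [D2 M2].
  pose proof (DeltaP_mid P Q1 Q2 D1 D2) as Dm.
  pose proof (M1 _ D2) as I21. pose proof (M2 _ D1) as I12.
  pose proof (M1 _ Dm) as Im.
  rewrite !condEnt_cells in I21, I12, Im.
  pose proof (DeltaP_Qs P Q1 D1) as E1. pose proof (DeltaP_Qs P Q2 D2) as E2.
  destruct D1 as [[N1 _] _]. destruct D2 as [[N2 _] _].
  pose proof (cell_mid (Q1 false false false) (Q1 true false false) (Q2 false false false) (Q2 true false false)
      (N1 false false false) (N1 true false false) (N2 false false false) (N2 true false false)) as C.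
  pose proof (cell_mid (Q1 false false true) (Q1 true false true) (Q2 false false true) (Q2 true false true)
      (N1 false false true) (N1 true false true) (N2 false false true) (N2 true false true)) as C0.
  pose proof (cell_mid (Q1 false true false) (Q1 true true false) (Q2 false true false) (Q2 true true false)
      (N1 false true false) (N1 true true false) (N2 false true false) (N2 true true false)) as C1.
  pose proof (cell_mid (Q1 false true true) (Q1 true true true) (Q2 false true true) (Q2 true true true)
      (N1 false true true) (N1 true true true) (N2 false true true) (N2 true true true)) as C2.
  destruct C as [Cl Cs]. destruct C0 as [C0l C0s].
  destruct C1 as [C1l C1s]. destruct C2 as [C2l C2s].
  assert (X1 : Q1 false false false * Q2 true false false = Q2 false false false * Q1 true false false).
  { destruct (Req_dec (Q1 false false false * Q2 true false false) (Q2 false false false * Q1 true false false)) as [e|ne]; [exact e|].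
    specialize (Cs ne). exfalso. lra. }
  assert (X2 : Q1 false false true * Q2 true false true = Q2 false false true * Q1 true false true).
  { destruct (Req_dec (Q1 false false true * Q2 true false true) (Q2 false false true * Q1 true false true)) as [e|ne]; [exact e|].
    specialize (C0s ne). exfalso. lra. }
  assert (X3 : Q1 false true false * Q2 true true false = Q2 false true false * Q1 true true false).
  { destruct (Req_dec (Q1 false true false * Q2 true true false) (Q2 false true false * Q1 true true false)) as [e|ne]; [exact e|].
    specialize (C1s ne). exfalso. lra. }
  assert (X4 : Q1 false true true * Q2 true true true = Q2 false true true * Q1 true true true).
  { destruct (Req_dec (Q1 false true true * Q2 true true true) (Q2 false true true * Q1 true true true)) as [e|ne]; [exact e|].
    specialize (C2s ne). exfalso. lra. }
  clear - X1 X2 X3 X4 HT0 HT1 Hbc E1 E2.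
  rewrite E1, E2 in X1, X2, X3, X4. unfold Qs in X1, X2, X3, X4. simpl in X1, X2, X3, X4.
  rewrite !margT_split in HT0, HT1, Hbc.
  destruct (uniq_core _ _ _ _ _ _ _ _ _ _ HT0 HT1 X1 X2 X3 X4) as [[e0 e1]|H].
  - rewrite E1, E2, e0, e1. reflexivity.
  - exfalso. apply Hbc. exact H.
Qed.

Definition phit (x : R) : R := if Rlt_dec 0 x then x * ln x else 0.

Lemma xlnx_bound y : 0 < y < 1 -> Rabs (y * ln y) <= 2 * sqrt y.
Proof.
  intros [H0 H1].
  pose proof (sqrt_lt_R0 y H0) as Hz. set (z := sqrt y) in *.
  assert (Ez : z * z = y) by (apply sqrt_sqrt; lra).
  assert (Ly : ln y = 2 * ln z).
  { rewrite <- Ez. rewrite ln_mult by lra. ring. }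
  assert (Lneg : ln y < 0). { rewrite <- ln_1. apply ln_increasing; lra. }
  assert (Lz : ln (/ z) <= / z - 1) by (apply ln_le_m1; apply Rinv_0_lt_compat; lra).
  rewrite ln_Rinv in Lz by lra.
  rewrite Rabs_left by nra.
  rewrite Ly, <- Ez.
  assert (z * z * (- ln z) <= z * z * (/ z - 1)) by (apply Rmult_le_compat_l; nra).
  replace (z * z * (/ z - 1)) with (z - z * z) in H by (field; lra).
  nra.
Qed.

Lemma phit_cont x : continuity_pt phit x.
Proof.
  destruct (Rtotal_order x 0) as [Hn|[Hz|Hp]].
  - apply continuity_pt_locally_ext with (f := fun _ => 0) (a := - x); [lra| |].
    + intros y Hy. unfold Rdist in Hy. unfold phit. destruct (Rlt_dec 0 y); [|reflexivity].
      exfalso. pose proof (Rle_abs (y - x)). pose proof (Rle_abs (-(y - x))).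
      rewrite Rabs_Ropp in H0. lra.
    + apply continuity_pt_const. intros a b; reflexivity.
  - subst x. intros eps Heps.
    exists (Rmin 1 ((eps / 2) * (eps / 2))). split.
    + apply Rmin_glb_lt; [lra|]. nra.
    + intros y [_ Hy]. simpl in *. unfold R_dist in *.
      unfold phit at 2. destruct (Rlt_dec 0 0); [lra|].
      rewrite Rminus_0_r in *. unfold phit. destruct (Rlt_dec 0 y) as [Hy0|Hy0].
      * rewrite Rabs_right in Hy by lra.
        pose proof (Rmin_l 1 ((eps / 2) * (eps / 2))).
        pose proof (Rmin_r 1 ((eps / 2) * (eps / 2))).
        assert (Hy1 : y < 1) by lra. pose proof (xlnx_bound y (conj Hy0 Hy1)).
        assert (sqrt y < eps / 2).
        { rewrite <- (sqrt_square (eps / 2)) by lra. apply sqrt_lt_1; lra. }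
        lra.
      * rewrite Rabs_R0. lra.
  - apply continuity_pt_locally_ext with (f := fun y => y * ln y) (a := x); [lra| |].
    + intros y Hy. unfold Rdist in Hy. unfold phit. destruct (Rlt_dec 0 y); [reflexivity|].
      exfalso. pose proof (Rle_abs (-(y - x))). rewrite Rabs_Ropp in H. lra.
    + apply (continuity_pt_mult (fun y => y) ln).
      * apply derivable_continuous_pt. apply derivable_pt_id.
      * apply derivable_continuous_pt. exists (/ x). apply derivable_pt_lim_ln; lra.
Qed.

Lemma cell_phit u v : 0 <= u -> 0 <= v ->
  cell u v = (phit (u + v) - phit u - phit v) / ln 2.
Proof.
  intros Hu Hv. pose proof ln2_pos. unfold cell, entTerm, phit.
  destruct (Rlt_dec 0 u); destruct (Rlt_dec 0 v); destruct (Rlt_dec 0 (u+v)); try lra.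
  - replace ((u + v) / u) with ((u + v) * / u) by reflexivity.
    replace ((u + v) / v) with ((u + v) * / v) by reflexivity.
    rewrite !ln_mult, !ln_Rinv; try lra; try (apply Rinv_0_lt_compat; lra).
  - assert (v = 0) by lra. subst.
    rewrite !Rplus_0_r. replace (u / u) with 1 by (field; lra). rewrite ln_1. field; lra.
  - assert (u = 0) by lra. subst.
    rewrite !Rplus_0_l. replace (v / v) with 1 by (field; lra). rewrite ln_1. field; lra.
Qed.

Definition cphi (u v : R) : R := (phit (u + v) - phit u - phit v) / ln 2.

Definition Psi (P : jdist) (p : R * R) : R :=
  cphi (Qs P (fst p) (snd p) false false false) (Qs P (fst p) (snd p) true false false) +
  cphi (Qs P (fst p) (snd p) false false true) (Qs P (fst p) (snd p) true false true) +
  cphi (Qs P (fst p) (snd p) false true false) (Qs P (fst p) (snd p) true true false) +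
  cphi (Qs P (fst p) (snd p) false true true) (Qs P (fst p) (snd p) true true true).

Lemma condEnt_Psi P s0 s1 : DeltaP P (Qs P s0 s1) ->
  condEntT_XY (Qs P s0 s1) = Psi P (s0, s1).
Proof.
  intros [[N _] _]. rewrite condEnt_cells. unfold Psi, cphi. simpl fst; simpl snd.
  rewrite !cell_phit; try apply N. reflexivity.
Qed.

Definition lo (P : jdist) (t : bool) : R := Rmax 0 (margTY P t false - margTX P t true).
Definition hi (P : jdist) (t : bool) : R := Rmin (margTX P t false) (margTY P t false).

Lemma okc_iff P t s : okc P t s <-> lo P t <= s <= hi P t.
Proof.
  unfold okc, lo, hi. split.
  - intros (H1 & H2 & H3 & H4). split; [apply Rmax_lub | apply Rmin_glb]; lra.
  - intros [H1 H2]. pose proof (Rmax_l 0 (margTY P t false - margTX P t true)).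
    pose proof (Rmax_r 0 (margTY P t false - margTX P t true)).
    pose proof (Rmin_l (margTX P t false) (margTY P t false)).
    pose proof (Rmin_r (margTX P t false) (margTY P t false)). lra.
Qed.

Lemma DeltaP_self P : is_dist P -> DeltaP P P.
Proof. intros H. split; [exact H | split; intros; reflexivity]. Qed.

From mathcomp Require Import all_boot all_order all_algebra.
From mathcomp Require Import all_classical all_reals all_analysis.
From mathcomp Require Import Rstruct Rstruct_topology.
Import Order.TTheory GRing.Theory Num.Theory.
Open Scope R_scope.

Lemma EVT2 (f : R * R -> R) (lo0 hi0 lo1 hi1 : R) :
  lo0 <= hi0 -> lo1 <= hi1 -> continuous f ->
  exists c0 c1, (lo0 <= c0 <= hi0 /\ lo1 <= c1 <= hi1) /\
   forall s0 s1, lo0 <= s0 <= hi0 -> lo1 <= s1 <= hi1 -> f (s0, s1) <= f (c0, c1).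
Proof.
move=> h0 h1 cf.
set A := (`[lo0, hi0]%classic `*` `[lo1, hi1]%classic)%classic.
have cA : compact A by apply: compact_setX; apply: segment_compact.
have A0 : (A !=set0)%classic.
  exists (lo0, lo1); rewrite /A /=; split; rewrite /= in_itv /=; apply/andP; split; apply/RleP; lra.
have cfA : ({within A, continuous f})%classic by apply: continuous_subspaceT.
have [[c0 c1] cin cmax] := compact_EVT_max A0 cA cfA.
exists c0, c1; split.
  move: cin; rewrite inE /A /= => -[]; rewrite /= !in_itv /=.
  by move=> /andP[/RleP ? /RleP ?] /andP[/RleP ? /RleP ?]; lra.
move=> s0 s1 hs0 hs1; apply/RleP; apply: (cmax (s0, s1)).
rewrite inE /A /=; split; rewrite /= in_itv /=; apply/andP; split; apply/RleP; lra.
Qed.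

Lemma cD (f g : R * R -> R) : continuous f -> continuous g ->
  continuous (fun p => f p + g p).
Proof. move=> cf cg x. have := @continuousD R R^o _ f g x (cf x) (cg x). move=> h. exact: h. Qed.

Lemma cB (f g : R * R -> R) : continuous f -> continuous g ->
  continuous (fun p => f p - g p).
Proof. move=> cf cg x. have := @continuousB R R^o _ f g x (cf x) (cg x). move=> h. exact: h. Qed.

Lemma cN (f : R * R -> R) : continuous f ->
  continuous (fun p => - f p).
Proof. move=> cf x. have := @continuousN R R^o _ f x (cf x). move=> h. exact: h. Qed.

Lemma ccst (k : R) : continuous (fun _ : R * R => k).
Proof. by move=> x; apply: cst_continuous. Qed.

Lemma cdiv (f : R * R -> R) (k : R) : continuous f ->
  continuous (fun p => f p / k).
Proof.
move=> cf x. have := @continuousM R _ f (fun _ => / k) x (cf x) (ccst (/ k) x).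
move=> h. exact: h.
Qed.

Lemma cfst : continuous (fun p : R * R => p.1).
Proof. by move=> x; apply: cvg_fst. Qed.

Lemma csnd : continuous (fun p : R * R => p.2).
Proof. by move=> x; apply: cvg_snd. Qed.

Lemma cphit (f : R * R -> R) : continuous f -> continuous (fun p => phit (f p)).
Proof.
move=> cf x; apply: (continuous_comp (cf x)).
by apply/continuity_pt_cvg; apply: phit_cont.
Qed.

Lemma Psi_cont P : continuous (Psi P).
Proof.
rewrite /Psi /cphi /Qs /=.
repeat (first [apply: cB | apply: cD | apply: cN | apply: cdiv | apply: cphit | apply: cfst | apply: csnd | apply: ccst]).
Qed.

Theorem mainTheorem17 (P : jdist) (HP : is_dist P)
  (HT0 : 0 < margT P false) (HT1 : 0 < margT P true) :
  let b := margTX P false false / margT P false in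
  let c := margTX P true false / margT P true in
  let d := margTY P false false / margT P false in
  let e := margTY P true false / margT P true in
  ~ (b = c /\ d = e) ->
  exists! Q : jdist, is_argmax P Q.
Proof.
move=> b c d e Hbc.
have Hun := argmax_unique P HT0 HT1 Hbc.
have hlo t : lo P t <= hi P t.
  have := DeltaP_ok P P t (DeltaP_self P HP); rewrite okc_iff; lra.
have [c0 [c1 [[r0 r1] cmax]]] := @EVT2 (Psi P) _ _ _ _ (hlo false) (hlo true) (Psi_cont P).
have D : DeltaP P (Qs P c0 c1).
  by apply: Qs_DeltaP => //; apply/okc_iff.
have Hmax : is_argmax P (Qs P c0 c1).
  split => // Q' DQ'.
  rewrite (DeltaP_Qs P Q' DQ') condEnt_Psi ?condEnt_Psi //; last by rewrite -DeltaP_Qs.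
  apply: cmax; apply/okc_iff; exact: DeltaP_ok.
exists (Qs P c0 c1); split => // Q' HQ'.
exact: Hun.
Qed.
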